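(* Let $(V,g)$ be an $n$-dimensional Euclidean vector space, let $\mathfrak{R}\colon \Lambda^2 V \to \Lambda^2 V$ be an algebraic curvature operator with eigenvalues $\lambda_1 \leq \ldots \leq \lambda_{\binom{n}{2}}$, and let $T \in \mathcal{T}^{(0,k)}(V)$. Suppose there is a real number $C \geq 1$ such that $$ |LT|^2 \leq \frac{1}{C} |\hat{T}|^2 |L|^2 \quad \text{for all } L \in \mathfrak{so}(V). $$ Let $\kappa \leq 0$. If $\frac{1}{\lfloor C \rfloor}(\lambda_1 + \ldots + \lambda_{\lfloor C \rfloor}) \geq \kappa$, then $g(\mathfrak{R}(\hat{T}), \hat{T}) \geq \kappa |\hat{T}|^2$. If $\lambda_1 + \ldots + \lambda_{\lfloor C \rfloor} > 0$, then $g(\mathfrak{R}(\hat{T}), \hat{T}) > 0$ unless $\hat{T} = 0$.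
   Context: $\mathcal{T}^{(0,k)}(V)$ is the space of $(0,k)$-tensors, with norm $|T|^2 = \sum_{i_1,\ldots,i_k} T_{i_1\ldots i_k}^2$ in any orthonormal basis. $\mathfrak{so}(V)$ is identified with $\Lambda^2 V$ via $(X \wedge Y)(Z) = g(X,Z)Y - g(Y,Z)X$, and $\Lambda^2 V$ carries the inner product for which $\{e_i \wedge e_j\}_{i<j}$ is orthonormal whenever $\{e_i\}$ is; $|L|$ is the corresponding norm. For $L \in \mathfrak{so}(V)$, $(LT)(X_1,\ldots,X_k) = -\sum_{i=1}^k T(X_1,\ldots,LX_i,\ldots,X_k)$. The tensor $\hat{T} \in \Lambda^2 V \otimes \mathcal{T}^{(0,k)}(V)$ is defined by $g(L, \hat{T}(X_1,\ldots,X_k)) = (LT)(X_1,\ldots,X_k)$ for all $L$; equivalently $\hat{T} = \sum_\alpha \Xi_\alpha \otimes \Xi_\alpha T$ for any orthonormal basis $\{\Xi_\alpha\}$ of $\Lambda^2 V$, so $|\hat{T}|^2 = \sum_\alpha |\Xi_\alpha T|^2$. Further $\mathfrak{R}(\hat{T}) = \sum_\alpha \mathfrak{R}(\Xi_\alpha) \otimes \Xi_\alpha T$ and $g(\mathfrak{R}(\hat{T}),\hat{T}) = \sum_{\alpha,\beta} g(\mathfrak{R}(\Xi_\alpha),\Xi_\beta)\, g(\Xi_\alpha T, \Xi_\beta T)$. An algebraic curvature operator is a self-adjoint map $\mathfrak{R}$ on $\Lambda^2 V$ whose associated tensor $\operatorname{Rm}(x,y,z,w) = g(\mathfrak{R}(x\wedge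 y), z \wedge w)$ satisfies the first Bianchi identity. *)

(* Defs.v *)
(* V = R^n with its standard (orthonormal) basis e_0..e_{n-1}. *)
From HB Require Import structures.
From mathcomp Require Import all_boot all_order all_algebra.
From mathcomp Require Import reals.
Set Implicit Arguments. Unset Strict Implicit. Unset Printing Implicit Defensive.
Import Order.TTheory GRing.Theory Num.Theory.
Local Open Scope ring_scope.

(* Index set of the orthonormal basis {e_a /\ e_b}_{a<b} of Lambda^2 V. *)
Definition pairT (n : nat) := {p : 'I_n * 'I_n | (p.1 < p.2)%N}.
Definition N2 (n : nat) : nat := #|{: pairT n}|.
Definition pr (n : nat) (al : 'I_(N2 n)) : 'I_n * 'I_n :=
  val (@enum_val (pairT n) predT al).

Section Defs.
Variable R : realType.
Variable n k : nat.

(* Elements of Lambda^2 V = so(V): coordinate row vectors in the basis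
   {e_a /\ e_b}_{a<b}; this basis is orthonormal by convention. *)
Definition bivec := 'rV[R]_(N2 n).

Definition wedge (a b : 'I_n) : bivec :=
  \row_(al < N2 n) (if pr al == (a, b) then 1
                    else if pr al == (b, a) then -1 else 0).

Definition bnorm2 (L : bivec) : R := \sum_(al < N2 n) L 0 al ^+ 2.

(* The endomorphism of V given by L, via (X/\Y)(Z) = g(X,Z) Y - g(Y,Z) X:
   Lmat L a c = c-th coordinate of L(e_a). *)
Definition Lmat (L : bivec) (a c : 'I_n) : R :=
  \sum_(al < N2 n) L 0 al *
     ((((pr al).1 == a) && ((pr al).2 == c))%:R
      - (((pr al).2 == a) && ((pr al).1 == c))%:R).

(* (0,k)-tensors, given by their components in the basis e. *)
Definition tensor := {ffun 'I_k -> 'I_n} -> R.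

Definition tnorm2 (T : tensor) : R := \sum_(i : {ffun 'I_k -> 'I_n}) T i ^+ 2.

Definition upd (idx : {ffun 'I_k -> 'I_n}) (i : 'I_k) (c : 'I_n)
  : {ffun 'I_k -> 'I_n} := [ffun j => if j == i then c else idx j].

(* (L T)(X_1..X_k) = - sum_i T(X_1,..,L X_i,..,X_k), in components *)
Definition actT (L : bivec) (T : tensor) : tensor :=
  fun idx => - \sum_(i < k) \sum_(c < n) Lmat L (idx i) c * T (upd idx i c).

(* hat T = sum_alpha Xi_alpha (x) Xi_alpha T, with Xi the standard
   orthonormal basis of Lambda^2 V: component (alpha, idx). *)
Definition That (T : tensor) (al : 'I_(N2 n)) : tensor :=
  actT (delta_mx 0 al) T.

Definition That_norm2 (T : tensor) : R :=
  \sum_(al < N2 n) tnorm2 (That T al).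

(* Curvature operator as the symmetric matrix Rop with
   Rop al be = g(Rfrak(Xi_al), Xi_be). *)
Definition Rm (Rop : 'M[R]_(N2 n)) (a b c d : 'I_n) : R :=
  (wedge a b *m Rop *m (wedge c d)^T) 0 0.

Definition algebraic_curvature_operator (Rop : 'M[R]_(N2 n)) : Prop :=
  Rop^T = Rop /\
  forall x y z w : 'I_n,
    Rm Rop x y z w + Rm Rop y z x w + Rm Rop z x y w = 0.

(* g(Rfrak(hat T), hat T) = sum_{al,be} g(Rfrak(Xi_al),Xi_be) g(Xi_al T, Xi_be T) *)
Definition RThat (Rop : 'M[R]_(N2 n)) (T : tensor) : R :=
  \sum_(al < N2 n) \sum_(be < N2 n)
     Rop al be * \sum_(i : {ffun 'I_k -> 'I_n}) That T al i * That T be i.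

Definition sorted_eigenvalues (Rop : 'M[R]_(N2 n)) (lam : 'I_(N2 n) -> R) : Prop :=
  (forall i j : 'I_(N2 n), (i <= j)%N -> lam i <= lam j) /\
  char_poly Rop = \prod_(i < N2 n) ('X - (lam i)%:P).

(* lambda_1 + ... + lambda_m (terms beyond binom(n,2) are absent) *)
Definition eig_partial_sum (lam : 'I_(N2 n) -> R) (m : nat) : R :=
  \sum_(i < N2 n | (i < m)%N) lam i.

End Defs.

(* Main.v *)
Set Warnings "-notation-overridden -ambiguous-paths".
Require Import Defs.
From HB Require Import structures.
From mathcomp Require Import all_boot all_order all_algebra.
From mathcomp Require Import reals.
From mathcomp Require Import complex ring lra zify.
Import Order.TTheory GRing.Theory Num.Theory.
Local Open Scope ring_scope.
Set Implicit Arguments. Unset Strict Implicit.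



Section PartA.
Variables (R : realType) (n k : nat) (T : tensor R n k).
Local Notation N := (N2 n).

Definition Emx (al : 'I_N) (a c : 'I_n) : R :=
  (((pr al).1 == a) && ((pr al).2 == c))%:R
      - (((pr al).2 == a) && ((pr al).1 == c))%:R.

Lemma Lmat_delta al a c : Lmat (delta_mx 0 al : bivec R n) a c = Emx al a c.
Proof.
rewrite /Lmat (bigD1 al) //= big1 ?addr0; first by rewrite mxE !eqxx mul1r.
by move=> be nb; rewrite mxE (negbTE nb) andbF mul0r.
Qed.

Lemma That_lin (L : bivec R n) idx :
  actT L T idx = \sum_(al < N) L 0 al * That T al idx.
Proof.
rewrite /That /actT.
under [RHS]eq_bigr => al _ do rewrite mulrN.
rewrite sumrN; congr (- _).
under [RHS]eq_bigr => al _ do under eq_bigr => i _ do under eq_bigr => c _ do rewrite Lmat_delta.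
under [RHS]eq_bigr => al _ do rewrite mulr_sumr.
rewrite [RHS]exchange_big /=; apply: eq_bigr => i _.
under [RHS]eq_bigr => al _ do rewrite mulr_sumr.
rewrite [RHS]exchange_big /=; apply: eq_bigr => c _.
rewrite /Lmat mulr_suml; apply: eq_bigr => al _.
by rewrite mulrA.
Qed.

Definition G (al be : 'I_N) : R :=
  \sum_(i : {ffun 'I_k -> 'I_n}) That T al i * That T be i.

Definition Q (x : 'I_N -> R) : R :=
  \sum_(al < N) \sum_(be < N) x al * x be * G al be.

Lemma Q_sq x : Q x = \sum_i (\sum_(al < N) x al * That T al i) ^+ 2.
Proof.
rewrite /Q.
under [RHS]eq_bigr => i _ do rewrite expr2 mulr_suml.
under [RHS]eq_bigr => i _ do under eq_bigr => al _ do rewrite mulr_sumr.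
rewrite [RHS]exchange_big; apply: eq_bigr => al _ /=.
rewrite [RHS]exchange_big; apply: eq_bigr => be _ /=.
rewrite /G mulr_sumr; apply: eq_bigr => i _.
by rewrite mulrACA -!mulrA; congr (_ * _); rewrite mulrCA.
Qed.

Lemma Q_ge0 x : 0 <= Q x.
Proof. by rewrite Q_sq sumr_ge0 // => i _; rewrite sqr_ge0. Qed.

Lemma Q_act (L : bivec R n) : tnorm2 (actT L T) = Q (fun al => L 0 al).
Proof. by rewrite Q_sq /tnorm2; apply: eq_bigr => i _; rewrite That_lin. Qed.

Lemma G_sym al be : G al be = G be al.
Proof. by rewrite /G; apply: eq_bigr => i _; rewrite mulrC. Qed.

Lemma tE : That_norm2 T = \sum_(al < N) G al al.
Proof. by apply: eq_bigr => al _; rewrite /tnorm2 /G; apply: eq_bigr => i _; rewrite expr2. Qed.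

Lemma RThatE (Rop : 'M[R]_N) :
  RThat Rop T = \sum_(al < N) \sum_(be < N) Rop al be * G al be.
Proof. by []. Qed.

Lemma Q_bound (c : R) :
  (forall L : bivec R n, tnorm2 (actT L T) <= c * bnorm2 L) ->
  forall x, Q x <= c * \sum_(al < N) x al ^+ 2.
Proof.
move=> H x; have := H (\row_al x al); rewrite Q_act /bnorm2.
have -> : Q (fun al => (\row_j x j) 0 al) = Q x.
  by rewrite /Q; apply: eq_bigr => al _; apply: eq_bigr => be _; rewrite !mxE.
by under eq_bigr => al _ do rewrite mxE.
Qed.

End PartA.



Section Cx.
Variable R : rcfType.
Local Notation C := R[i].
Local Notation rc := (real_complex R).
Local Notation cRe := (@complex.Re R).
Local Notation cIm := (@complex.Im R).

Lemma ReD (x y : C) : cRe (x + y) = cRe x + cRe y. Proof. by case: x; case: y. Qed.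
Lemma ImD (x y : C) : cIm (x + y) = cIm x + cIm y. Proof. by case: x; case: y. Qed.

Lemma Re_sum (I : Type) (r : seq I) (F : I -> C) :
  cRe (\sum_(i <- r) F i) = \sum_(i <- r) cRe (F i).
Proof. exact: (big_morph _ ReD). Qed.
Lemma Im_sum (I : Type) (r : seq I) (F : I -> C) :
  cIm (\sum_(i <- r) F i) = \sum_(i <- r) cIm (F i).
Proof. exact: (big_morph _ ImD). Qed.

Lemma cx_ext (x y : C) : cRe x = cRe y -> cIm x = cIm y -> x = y.
Proof. by case: x; case: y => /= a b c d -> ->. Qed.

Lemma conj_mulE (z w : C) (g : R) :
  z^* * w * rc g =
  Complex ((cRe z * cRe w + cIm z * cIm w) * g) ((cRe z * cIm w - cIm z * cRe w) * g).
Proof.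
case: z => a b; case: w => c d /=.
apply: cx_ext => /=; ring.
Qed.

Lemma mul_conjE (z : C) : z * z^* = rc (cRe z ^+ 2 + cIm z ^+ 2).
Proof. case: z => a b; apply: cx_ext => /=; ring. Qed.

Lemma rcM (x y : R) : rc (x * y) = rc x * rc y. Proof. exact: rmorphM. Qed.
Lemma rc1 : rc 1 = 1. Proof. exact: rmorph1. Qed.
Lemma rc_sum (I : Type) (r : seq I) (F : I -> R) :
  rc (\sum_(i <- r) F i) = \sum_(i <- r) rc (F i).
Proof. exact: rmorph_sum. Qed.

Lemma real_rc (z : C) : z \is Num.real -> z = rc (cRe z).
Proof. by move=> /complex_realP [x ->]. Qed.

End Cx.

Lemma char_poly_conj (F : comUnitRingType) m (P A : 'M[F]_m) :
  P \in unitmx -> char_poly (invmx P *m A *m P) = char_poly A.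
Proof.
move=> Pu; rewrite /char_poly /char_poly_mx.
set M1 := map_mx polyC (invmx P); set M2 := map_mx polyC P.
have M12 : M1 *m M2 = 1%:M by rewrite -map_mxM mulVmx // map_mx1.
have -> : map_mx polyC (invmx P *m A *m P) = M1 *m map_mx polyC A *m M2
  by rewrite !map_mxM.
have HX : ('X%:M : 'M[{poly F}]_m) = M1 *m 'X%:M *m M2
  by rewrite scalar_mxC -mulmxA M12 mulmx1.
by rewrite {1}HX -mulmxBl -mulmxBr !det_mulmx mulrAC -det_mulmx M12 det1 mul1r.
Qed.

Section Mx.
Variables (R : realType) (n k : nat) (T : tensor R n k) (Rop : 'M[R]_(N2 n)).
Hypothesis Rsym : Rop^T = Rop.
Local Notation C := R[i].
Local Notation rc := (real_complex R).
Local Notation cRe := (@complex.Re R).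
Local Notation cIm := (@complex.Im R).
Local Notation N := (N2 n).
Local Open Scope sesquilinear_scope.

Lemma conj_rc (x : R) : (rc x)^* = rc x.
Proof. by apply: cx_ext => //=; rewrite oppr0. Qed.

Definition Rc := map_mx rc Rop.

Lemma Rc_herm : Rc \is hermsymmx.
Proof.
apply/is_hermitianmxP; rewrite expr0 scale1r; apply/matrixP => i j.
have Hs : Rop i j = Rop j i by rewrite -[in RHS]Rsym mxE.
by rewrite !mxE conj_rc Hs.
Qed.

Definition P := spectralmx Rc.
Definition D := spectral_diag Rc.

Lemma P_unitary : P \is unitarymx.
Proof. exact: spectral_unitarymx. Qed.

Lemma Rc_decomp : Rc = P^t* *m diag_mx D *m P.
Proof.
rewrite -invmx_unitary ?P_unitary //.
exact/orthomx_spectralP/hermitian_normalmx/Rc_herm.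
Qed.

Lemma PPt : P *m P^t* = 1%:M.
Proof. exact/unitarymxP/P_unitary. Qed.

Lemma PtP : P^t* *m P = 1%:M.
Proof. by rewrite -invmx_unitary ?P_unitary // mulVmx // spectral_unit. Qed.

Definition d (g : 'I_N) : R := cRe (D 0 g).

Lemma D_real g : D 0 g = rc (d g).
Proof.
apply: real_rc.
by have /mxOverP := hermitian_spectral_diag_real Rc_herm; apply.
Qed.

Lemma Rc_entry al be :
  Rc al be = \sum_(g < N) (P g al)^* * rc (d g) * P g be.
Proof.
rewrite {1}Rc_decomp mxE; apply: eq_bigr => g _.
by rewrite mul_mx_diag !mxE -D_real.
Qed.


Definition a (g : 'I_N) al := cRe (P g al).
Definition b (g : 'I_N) al := cIm (P g al).
Definition w g := Q T (a g) + Q T (b g).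

Lemma W_entry g :
  \sum_(al < N) \sum_(be < N) (P g al)^* * P g be * rc (G T al be) = rc (w g).
Proof.
under eq_bigr => al _ do under eq_bigr => be _ do rewrite conj_mulE.
apply: cx_ext.
  rewrite Re_sum /= /w /Q -big_split; apply: eq_bigr => al _ /=.
  rewrite Re_sum -big_split; apply: eq_bigr => be _ /=.
  by rewrite /a /b; ring.
rewrite Im_sum /=; under eq_bigr => al _ do rewrite Im_sum /=.
under eq_bigr => al _ do under eq_bigr => be _ do rewrite mulrBl.
under eq_bigr => al _ do rewrite sumrB.
rewrite sumrB [X in _ - X = _]exchange_big /=.
under [X in _ - X = _]eq_bigr => al _ do under eq_bigr => be _ do rewrite G_sym.
apply/eqP; rewrite subr_eq0; apply/eqP.
by apply: eq_bigr => al _; apply: eq_bigr => be _; rewrite [complex.Im _ * _]mulrC.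
Qed.


Lemma RThat_c : rc (RThat Rop T) = \sum_(g < N) rc (d g) * rc (w g).
Proof.
rewrite RThatE rc_sum.
under eq_bigr => al _ do rewrite rc_sum.
have ERc : forall al be, rc (Rop al be) = Rc al be by move=> al be; rewrite mxE.
under eq_bigr => al _ do under eq_bigr => be _ do rewrite rcM ERc Rc_entry mulr_suml.
under eq_bigr => al _ do rewrite exchange_big.
rewrite exchange_big; apply: eq_bigr => g _ /=.
rewrite -W_entry mulr_sumr; apply: eq_bigr => al _.
rewrite mulr_sumr; apply: eq_bigr => be _.
by ring.
Qed.

Lemma row_norm g : \sum_(al < N) (a g al ^+ 2 + b g al ^+ 2) = 1.
Proof.
have H : \sum_(al < N) P g al * (P g al)^* = 1.
  have := congr1 (fun M : 'M[C]_N => M g g) PPt; rewrite !mxE eqxx mulr1n => HH.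
  rewrite -[RHS]HH; apply: eq_bigr => al _; by rewrite !mxE.
apply: (@complexI R); rewrite rc_sum rc1 -H.
by apply: eq_bigr => al _; rewrite mul_conjE.
Qed.

Lemma w_sum : \sum_(g < N) w g = That_norm2 T.
Proof.
apply: (@complexI R); rewrite rc_sum tE rc_sum.
under eq_bigr => g _ do rewrite -W_entry.
rewrite exchange_big; apply: eq_bigr => al _ /=.
rewrite exchange_big /=.
under eq_bigr => be _ do rewrite -mulr_suml.
have E : forall be, \sum_(g < N) (P g al)^* * P g be = (al == be)%:R.
  move=> be; have := congr1 (fun M : 'M[C]_N => M al be) PtP; rewrite !mxE => <-.
  by apply: eq_bigr => g _; rewrite !mxE.
under eq_bigr => be _ do rewrite E.
rewrite (bigD1 al) //= eqxx mul1r big1 ?addr0 //.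
by move=> be nb; rewrite eq_sym (negbTE nb) mul0r.
Qed.

Lemma perm_d (lam : 'I_N -> R) :
  char_poly Rop = \prod_(i < N) ('X - (lam i)%:P) ->
  perm_eq (map d (index_enum 'I_N)) (map lam (index_enum 'I_N)).
Proof.
move=> Hc.
have H1 : char_poly Rc = \prod_(i < N) ('X - (rc (lam i))%:P).
  by rewrite /Rc -map_char_poly Hc map_prod_XsubC.
have H2 : char_poly Rc = \prod_(i < N) ('X - (D 0 i)%:P).
  rewrite Rc_decomp -invmx_unitary ?P_unitary // char_poly_conj ?spectral_unit //.
  rewrite char_poly_trig ?diag_mx_is_trig //.
  by apply: eq_bigr => i _; rewrite mxE eqxx mulr1n.
have := @prod_XsubC_eq _ (map (fun i => D 0 i) (index_enum 'I_N))
   (map (fun i => rc (lam i)) (index_enum 'I_N)).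
rewrite !big_map -H1 -H2 => /(_ erefl) /(perm_map cRe); rewrite -!map_comp.
by [].
Qed.

End Mx.

Unset Implicit Arguments. Set Strict Implicit.


Theorem lemma2p1 (R : realType) (n k : nat) (Rop : 'M[R]_(N2 n))
  (lam : 'I_(N2 n) -> R) (T : tensor R n k) (C kappa : R) :
  algebraic_curvature_operator Rop ->
  sorted_eigenvalues Rop lam ->
  1 <= C ->
  (forall L : bivec R n,
      tnorm2 (actT L T) <= C^-1 * That_norm2 T * bnorm2 L) ->
  kappa <= 0 ->
  ((Num.truncn C)%:R^-1 * eig_partial_sum lam (Num.truncn C) >= kappa ->
     RThat Rop T >= kappa * That_norm2 T) /\
  (eig_partial_sum lam (Num.truncn C) > 0 ->
     (exists (al : 'I_(N2 n)) (i : {ffun 'I_k -> 'I_n}), That T al i != 0) ->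
     RThat Rop T > 0).
Proof.
move=> [Rsym _] [mono Hc] C1 Hb k0.
set t := That_norm2 T.
set m := Num.truncn C.
set N := N2 n.
have C0 : 0 < C by apply: lt_le_trans C1.
have m1 : (1 <= m)%N by rewrite /m truncn_gt0.
have mC : m%:R <= C by rewrite /m truncn_le ltW.
have m0 : 0 < m%:R :> R by rewrite ltr0n.
pose c := C^-1 * t.
have hw0 g : 0 <= w T Rop g by rewrite /w addr_ge0 // Q_ge0.
have hw1 g : w T Rop g <= c.
  rewrite /w; have := Q_bound Hb (a Rop g); have := Q_bound Hb (b Rop g).
  have := row_norm Rop g; rewrite big_split /= => HAB.
  have : c * (\sum_(al < N2 n) a Rop g al ^+ 2) + c * (\sum_(al < N2 n) b Rop g al ^+ 2) = c
    by rewrite -mulrDr HAB mulr1.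
  rewrite /c -/t; lra.
have hws : \sum_(g < N) w T Rop g = t := w_sum T Rop.
have hR : RThat Rop T = \sum_(g < N) d Rop g * w T Rop g.
  apply: (@complexI R); rewrite (RThat_c T Rsym) rc_sum.
  by apply: eq_bigr => g _; rewrite rcM.
have hperm (f : R -> R) : \sum_(g < N) f (d Rop g) = \sum_(i < N) f (lam i).
  rewrite -(big_map (d Rop) xpredT f) -(big_map lam xpredT f).
  exact: perm_big (perm_d Rsym Hc).
have t0 : 0 <= t by rewrite -hws sumr_ge0.
have key : t / m%:R * eig_partial_sum lam m <= RThat Rop T.
  case: (leqP m N) => [mN | Nm].
  - have i0lt : (m.-1 < N)%N by lia.
    pose i0 := Ordinal i0lt; pose mu := lam i0.
    have tm : c <= t / m%:R.
      rewrite /c mulrC ler_wpM2l // lef_pV2 ?posrE //.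
    have step g : mu * w T Rop g + t / m%:R * Num.min (d Rop g - mu) 0
                  <= d Rop g * w T Rop g.
      case: (boolP (mu <= d Rop g)) => h; last rewrite -ltNge in h.
        rewrite min_r ?subr_ge0 // mulr0 addr0.
        by rewrite ler_wpM2r.
      rewrite min_l; last by rewrite subr_le0 ltW.
      have hx : w T Rop g <= t / m%:R := le_trans (hw1 g) tm.
      have h1 : 0 <= mu - d Rop g by rewrite subr_ge0 ltW.
      have h2 : 0 <= t / m%:R - w T Rop g by rewrite subr_ge0.
      have := mulr_ge0 h1 h2.
      set q := t / m%:R; set x := w T Rop g; set y := d Rop g.
      move=> H; nra.
    have S1 : mu * t + t / m%:R * \sum_(g < N) Num.min (d Rop g - mu) 0
              <= RThat Rop T.
      rewrite hR -{1}hws mulr_sumr mulr_sumr -big_split.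
      by apply: ler_sum => g _; apply: step.
    have S3 : \sum_(i < N) Num.min (lam i - mu) 0
              = eig_partial_sum lam m - mu *+ m.
      rewrite (bigID (fun i : 'I_N => (i < m)%N)) /=.
      rewrite [X in _ + X]big1 ?addr0; last first.
        move=> i; rewrite -leqNgt => hi.
        rewrite min_r // subr_ge0; apply: mono; rewrite /i0 /=; exact: leq_trans (leq_pred m) hi.
      rewrite /eig_partial_sum.
      rewrite (eq_bigr (fun i => lam i - mu)); last first.
        move=> i hi; rewrite min_l // subr_le0; apply: mono; rewrite /i0 /= -ltnS (ltn_predK hi) //.
      rewrite sumrB; congr (_ - _).
      by rewrite -(big_ord_widen N (fun _ => mu) mN) sumr_const card_ord.
    rewrite (hperm (fun x => Num.min (x - mu) 0)) S3 mulrBr in S1.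
    have E : t / m%:R * (mu *+ m) = mu * t.
      rewrite -mulr_natr; field; by rewrite pnatr_eq0 -lt0n.
    rewrite E in S1; lra.
  - have Nlt : N%:R < C.
      apply: lt_le_trans mC; rewrite ltr_nat; lia.
    have tle : t <= c *+ N.
      rewrite -{1}hws; apply: le_trans (ler_sum _ (fun g _ => hw1 g)) _.
      by rewrite sumr_const card_ord.
    have tz : t = 0.
      apply/eqP; rewrite eq_le t0 andbT leNgt; apply/negP => tpos.
      move: tle; rewrite /c -mulr_natr => tle.
      have : C * t <= t * N%:R.
        have := ler_wpM2l (ltW C0) tle.
        by rewrite !mulrA mulfV ?gt_eqF // mul1r.
      nra.
    have w0 g : w T Rop g = 0.
      by apply/eqP; rewrite eq_le hw0 andbT; have := hw1 g; rewrite /c tz mulr0.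
    rewrite tz mul0r mul0r hR big1 // => g _; by rewrite w0 mulr0.
split.
  move=> hk.
  apply: le_trans key; have := ler_wpM2l t0 hk.
  by rewrite mulrA [t * kappa]mulrC.
move=> hS [al [i hne]].
have tpos : 0 < t.
  rewrite lt_def t0 andbT; apply/negP => /eqP tz.
  have h1 := (@psumr_eq0P _ _ xpredT _ (fun al _ => sumr_ge0 _ (fun i _ => sqr_ge0 (That T al i))) tz al isT).
  have := (@psumr_eq0P _ _ xpredT _ (fun i _ => sqr_ge0 (That T al i)) h1 i isT).
  by move/eqP; rewrite sqrf_eq0 (negbTE hne).
apply: lt_le_trans key.
by rewrite mulr_gt0 // divr_gt0.
Qed.
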